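(* Let $n$, $r$, $a$ be positive integers with $n=2r+1$ and $a\ge 2$. Then $$\rho_2(K(n+2a,r+a))\ \ge\ 2^{\lfloor a/2\rfloor}\,\rho_2(K(n,r)).$$
   Context: For integers $n\ge 2r$, the Kneser graph $K(n,r)$ has as vertices the $r$-element subsets of $[n]=\{1,\dots,n\}$, two vertices being adjacent iff they are disjoint. A $2$-packing of a graph $G$ is a set of vertices pairwise at distance at least $3$ in $G$; $\rho_2(G)$ is the maximum cardinality of a $2$-packing. *)

(* Defs.v *)
From mathcomp Require Import all_boot all_order.
Set Implicit Arguments. Unset Strict Implicit. Unset Printing Implicit Defensive.

Definition kvertex (n r : nat) (A : {set 'I_n}) : bool := #|A| == r.

Definition kadj (n r : nat) (A B : {set 'I_n}) : bool :=
  [&& kvertex r A, kvertex r B & [disjoint A & B]].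

(* dist(A,B) >= 3 in K(n,r) for vertices A, B: A <> B, A, B not adjacent,
   and no common neighbour (i.e. no path of length 0, 1 or 2). *)
Definition kdist_ge3 (n r : nat) (A B : {set 'I_n}) : bool :=
  [&& A != B, ~~ kadj r A B &
      ~~ [exists C : {set 'I_n}, kadj r A C && kadj r C B]].

Definition is_2packing (n r : nat) (P : {set {set 'I_n}}) : bool :=
  [forall A in P, kvertex r A] &&
  [forall A in P, forall B in P, (A != B) ==> kdist_ge3 r A B].

Definition rho2 (n r : nat) : nat :=
  \max_(P : {set {set 'I_n}} | is_2packing r P) #|P|.

(* Main.v *)
Require Import Defs.
From mathcomp Require Import all_boot all_order.
From mathcomp Require Import zify.
Set Implicit Arguments. Unset Strict Implicit.

Lemma pick_sub (T : finType) (X : {set T}) k :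
  k <= #|X| -> exists2 C : {set T}, C \subset X & #|C| = k.
Proof.
move=> hk; exists [set x in take k (enum X)].
  by apply/subsetP=> x; rewrite inE => /mem_take; rewrite mem_enum.
rewrite cardsE; have /card_uniqP -> : uniq (take k (enum X)).
  by apply: take_uniq; apply: enum_uniq.
by rewrite size_takel // -cardE.
Qed.

Lemma big_dist (N k : nat) (X Y : {set 'I_N}) :
  N = 2 * k + 1 -> #|X| = k -> #|Y| = k -> 0 < #|X :&: Y| ->
  #|X :&: Y| + 2 <= k -> kdist_ge3 k X Y.
Proof.
move=> hN hX hY h1 h2; apply/and3P; split.
- apply/eqP=> E; rewrite E setIid hY in h2; lia.
- rewrite /kadj -setI_eq0 -cards_eq0; apply/negP=> /and3P[_ _ /eqP h0]; lia.
- apply/negP=> /existsP[C /andP[/and3P[_ /eqP HC d1] /and3P[_ _ d2]]].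
  have sub : C \subset ~: (X :|: Y).
    apply/subsetP=> x xC; rewrite !inE.
    by rewrite (disjointFl d1 xC) (disjointFr d2 xC).
  have := subset_leq_card sub.
  have := cardsCs (X :|: Y); rewrite card_ord.
  have := cardsU X Y.
  have := subset_leq_card (subsetIl X Y).
  have := leq_card_setU X Y.
  have := max_card (~: (X :|: Y)); rewrite card_ord.
  lia.
Qed.

Lemma small_bounds (n r : nat) (A B : {set 'I_n}) :
  n = 2 * r + 1 -> #|A| = r -> #|B| = r -> kdist_ge3 r A B ->
  0 < #|A :&: B| /\ #|A :&: B| + 2 <= r.
Proof.
move=> hn hA hB /and3P[neq nadj nC].
have vA : kvertex r A by rewrite /kvertex hA.
have vB : kvertex r B by rewrite /kvertex hB.
split.
  move: nadj; rewrite /kadj vA vB /= -setI_eq0 -cards_eq0; by rewrite lt0n.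
rewrite leqNgt; apply/negP=> hbig.
have hc : r <= #|~: (A :|: B)|.
  have := cardsCs (A :|: B); rewrite card_ord.
  have := cardsU A B.
  have := leq_card_setU A B.
  have := max_card (~: (A :|: B)); rewrite card_ord.
  lia.
have [C sub hC] := pick_sub hc.
move/negP: nC; apply; apply/existsP; exists C.
have vC : kvertex r C by rewrite /kvertex hC.
rewrite /kadj vA vB vC /=.
apply/andP; split.
  rewrite disjoint_sym disjoints_subset; apply: subset_trans sub _.
  by rewrite setCS subsetUl.
rewrite disjoints_subset; apply: subset_trans sub _.
by rewrite setCS subsetUr.
Qed.

Lemma ltG (a : nat) (j : 'I_a) (b : bool) : 2 * j + b < 2 * a.
Proof. have := ltn_ord j; case: b => /=; lia. Qed.

Definition G (n a : nat) (f : 'I_a -> bool) (j : 'I_a) : 'I_(n + 2 * a) :=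
  rshift n (Ordinal (ltG j (f j))).

Lemma G_eq n a (f h : 'I_a -> bool) j k : G n f j = G n h k -> j = k /\ f j = h k.
Proof.
move/(congr1 val)=> /= E.
have : 2 * j + f j = 2 * k + h k by lia.
case: (f j); case: (h k) => /= E2; split => //; try (apply/val_inj => /=; lia); lia.
Qed.

Definition RR n a (f : 'I_a -> bool) : {set 'I_(n + 2 * a)} := [set G n f j | j in [set: 'I_a]].
Definition LL n a (A : {set 'I_n}) : {set 'I_(n + 2 * a)} := [set lshift (2 * a) i | i in A].
Definition FF n a (A : {set 'I_n}) (f : 'I_a -> bool) := LL a A :|: RR n f.
Definition Zn n a : {set 'I_(n + 2 * a)} := [set x : 'I_(n + 2 * a) | x < n].

Lemma LL_Z n a (A : {set 'I_n}) : LL a A \subset Zn n a.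
Proof. by apply/subsetP=> x /imsetP[i _ ->]; rewrite inE /= ltn_ord. Qed.

Lemma RR_Z n a (f : 'I_a -> bool) : [disjoint RR n f & Zn n a].
Proof.
rewrite -setI_eq0; apply/eqP/setP=> x; rewrite !inE.
apply/andP=> -[/imsetP[j _ ->]]; rewrite /=; lia.
Qed.

Lemma cardI_split (T : finType) (Z L1 L2 R1 R2 : {set T}) :
  L1 \subset Z -> L2 \subset Z -> [disjoint R1 & Z] -> [disjoint R2 & Z] ->
  #|(L1 :|: R1) :&: (L2 :|: R2)| = #|L1 :&: L2| + #|R1 :&: R2|.
Proof.
move=> /subsetP s1 /subsetP s2 d1 d2.
have -> : (L1 :|: R1) :&: (L2 :|: R2) = (L1 :&: L2) :|: (R1 :&: R2).
  apply/setP=> x; rewrite !inE.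
  case x1: (x \in L1); case x2: (x \in L2) => //=.
  - by rewrite (disjointFl d2 (s1 _ x1)) andbF.
  - by rewrite (disjointFl d1 (s2 _ x2)).
rewrite cardsU.
have -> : L1 :&: L2 :&: (R1 :&: R2) = set0.
  apply/setP=> x; rewrite !inE.
  case x1: (x \in L1) => //=.
  by rewrite (disjointFl d1 (s1 _ x1)) andbF.
by rewrite cards0 subn0.
Qed.

Lemma G_inj n a (f : 'I_a -> bool) : injective (@G n a f).
Proof. by move=> j k /G_eq[]. Qed.

Lemma card_RR n a (f : 'I_a -> bool) : #|RR n f| = a.
Proof. by rewrite card_imset ?cardsT ?card_ord //; apply: G_inj. Qed.

Lemma card_LL n a (A : {set 'I_n}) : #|LL a A| = #|A|.
Proof. by rewrite card_imset //; apply: lshift_inj. Qed.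

Lemma card_FF n a (A : {set 'I_n}) (f : 'I_a -> bool) : #|FF A f| = #|A| + a.
Proof.
rewrite /FF cardsU card_LL card_RR.
have -> : LL a A :&: RR n f = set0.
  apply/setP=> x; rewrite !inE; case xL: (x \in LL a A) => //=.
  by rewrite (disjointFl (@RR_Z n a f) (subsetP (@LL_Z n a A) _ xL)).
by rewrite cards0 subn0.
Qed.

Lemma cardI_FF n a (A B : {set 'I_n}) (f h : 'I_a -> bool) :
  #|FF A f :&: FF B h| = #|A :&: B| + #|RR n f :&: RR n h|.
Proof.
rewrite /FF (cardI_split (@LL_Z n a A) (@LL_Z n a B) (@RR_Z n a f) (@RR_Z n a h)).
rewrite /LL -imsetI ?card_imset //; first exact: lshift_inj.
by move=> x y _ _; apply: lshift_inj.
Qed.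

Lemma RR_disagree n a (f h : 'I_a -> bool) j1 j2 :
  j1 != j2 -> f j1 != h j1 -> f j2 != h j2 ->
  #|RR n f :&: RR n h| + 2 <= a.
Proof.
move=> nj d1 d2.
have notin j : f j != h j -> G n f j \notin RR n h.
  move=> dj; apply/imsetP=> -[k _ /G_eq[ejk efh]].
  by move: dj; rewrite efh ejk eqxx.
have sub : RR n f :&: RR n h \subset (RR n f :\ G n f j1) :\ G n f j2.
  apply/subsetP=> x; rewrite !inE => /andP[xf xh]; rewrite xf andbT.
  by apply/andP; split; apply/eqP=> E; subst x; [move: (notin _ d2) | move: (notin _ d1)]; rewrite xh.
have := subset_leq_card sub.
have := cardsD1 (G n f j1) (RR n f).
have := cardsD1 (G n f j2) (RR n f :\ G n f j1).
rewrite card_RR !inE.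
have -> : G n f j1 \in RR n f by apply: imset_f.
have -> : G n f j2 \in RR n f by apply: imset_f.
have -> : G n f j2 != G n f j1 by apply/eqP=> /G_inj/eqP; rewrite eq_sym (negbTE nj).
have L : forall x y z w : nat, x = 1 + y -> w = 1 + x -> z <= y -> z + 2 <= w by lia.
exact: L.
Qed.

Definition fe (a : nat) (e : {ffun 'I_(a./2) -> bool}) : 'I_a -> bool :=
  fun j => [exists i : 'I_(a./2), (j./2 == i) && e i].

Lemma fe_val a (e : {ffun 'I_(a./2) -> bool}) (j : 'I_a) (i : 'I_(a./2)) :
  j./2 = i -> fe e j = e i.
Proof.
move=> hj; rewrite /fe; apply/existsP/idP => [[i' /andP[/eqP h' ei']] | ei].
  by have -> : i = i' by apply/val_inj; rewrite /= -hj h'.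
by exists i; rewrite hj eqxx.
Qed.

Lemma RR_fe n a (e e' : {ffun 'I_(a./2) -> bool}) :
  e != e' -> #|RR n (fe e) :&: RR n (fe e')| + 2 <= a.
Proof.
move=> neq.
case: (pickP (fun i => e i != e' i)) => [i Hi | H]; last first.
  by case/eqP: neq; apply/ffunP => i; have /negbFE/eqP := H i.
have ha := odd_double_half a; have hi := ltn_ord i.
have p1 : i.*2 < a by lia.
have p2 : (i.*2).+1 < a by lia.
apply: (@RR_disagree n a _ _ (Ordinal p1) (Ordinal p2)).
- by apply/eqP=> /(congr1 val) /=; lia.
- by rewrite !(@fe_val _ _ _ i) //= doubleK.
- by rewrite !(@fe_val _ _ _ i) //= uphalf_double.
Qed.

Theorem corollary4p4 (n r a : nat) :
  0 < n -> 0 < r -> 0 < a -> n = 2 * r + 1 -> 2 <= a ->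
  2 ^ (a./2) * rho2 n r <= rho2 (n + 2 * a) (r + a).
Proof.
move=> _ r0 _ hn ha.
have ex : 0 < #|[pred P : {set {set 'I_n}} | is_2packing r P]|.
  apply/card_gt0P; exists set0; rewrite inE /is_2packing.
  by apply/andP; split; apply/forallP => A; apply/implyP; rewrite inE.
rewrite /rho2; have [P0 HP0 ->] := eq_bigmax_cond (fun P : {set {set 'I_n}} => #|P|) ex.
move: HP0; rewrite inE => /andP[/forallP hv /forallP hd].
have cA : forall A, A \in P0 -> #|A| = r.
  by move=> A hA; have /implyP/(_ hA)/eqP := hv A.
pose D := setX P0 [set: {ffun 'I_(a./2) -> bool}].
have hD1 : forall p, p \in D -> p.1 \in P0 by by move=> [p1 p2] /setXP[].
pose FFp (p : {set 'I_n} * {ffun 'I_(a./2) -> bool}) := FF p.1 (fe p.2).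
have core : forall p q, p \in D -> q \in D -> p != q ->
    0 < #|FFp p :&: FFp q| /\ #|FFp p :&: FFp q| + 2 <= r + a.
  move=> [A e] [B e'] /setXP[hA _] /setXP[hB _] /= neq.
  rewrite /FFp /= cardI_FF.
  have hR := subset_leq_card (subsetIl (RR n (fe e)) (RR n (fe e'))).
  rewrite card_RR in hR.
  case: (eqVneq A B) => [eAB | nAB].
    subst B; rewrite setIid (cA _ hA).
    have ne : e != e' by apply: contra neq => /eqP ->.
    have := RR_fe n ne.
    move: (#|RR n (fe e) :&: RR n (fe e')|) => x hx; lia.
  have := hd A; move/implyP/(_ hA)/forallP/(_ B)/implyP/(_ hB)/implyP/(_ nAB) => hk.
  have [h1 h2] := small_bounds hn (cA _ hA) (cA _ hB) hk.
  move: hR; move: (#|RR n (fe e) :&: RR n (fe e')|) => x hx; lia.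
pose Q := [set FFp p | p in D].
have cardQ : #|Q| = 2 ^ (a./2) * #|P0|.
  rewrite card_in_imset.
    by rewrite cardsX cardsT card_ffun card_bool card_ord mulnC.
  move=> p q hp hq E; apply/eqP; apply/negPn/negP => npq.
  have [_ h2] := core p q hp hq npq.
  move: h2; rewrite -E setIid /FFp card_FF.
  have -> : #|p.1| = r by apply: cA; exact: hD1.
  lia.
rewrite -cardQ.
suff HQ : is_2packing (r + a) Q.
  exact: leq_bigmax_cond.
apply/andP; split.
  apply/forallP => X; apply/implyP => /imsetP[p hp ->].
  rewrite /kvertex /FFp card_FF.
  by have -> : #|p.1| = r by apply: cA; exact: hD1.
apply/forallP => X; apply/implyP => /imsetP[p hp ->].
apply/forallP => Y; apply/implyP => /imsetP[q hq ->].
apply/implyP => neq.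
have npq : p != q by apply: contra neq => /eqP ->.
have [h1 h2] := core p q hp hq npq.
have cp : forall p, p \in D -> #|FFp p| = r + a.
  by move=> p' hp'; rewrite /FFp card_FF; congr (_ + _); apply: cA; exact: hD1.
apply: big_dist => //; [lia | exact: cp | exact: cp].
Qed.
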